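(* Let $(V,\langle\cdot,\cdot\rangle)$ be a Hilbert space and $Q\subset V$ a set of points with $M_Q:=\sup\{\|\mathbf v\|:\mathbf v\in Q\}<\infty$ and $-Q=Q$. Let $\epsilon>0$, and let $f:V\to\mathbb R^k$ be a linear map satisfying $$(1-\epsilon)\|\mathbf v_1-\mathbf v_2\|^2\le\|f(\mathbf v_1)-f(\mathbf v_2)\|^2\le(1+\epsilon)\|\mathbf v_1-\mathbf v_2\|^2\quad\text{for all }\mathbf v_1,\mathbf v_2\in Q,$$ where the norm on $\mathbb R^k$ is induced by a fixed inner product, and let $f^*:\mathbb R^k\to V$ be the adjoint with respect to these inner products. Then for all $\mathbf w_1,\mathbf w_2\in\mathrm{span}\{Q\}$, $$|\langle\mathbf w_1,(\mathbb I_V-f^*\circ f)(\mathbf w_2)\rangle|\le\epsilon M_Q^2\|\mathbf w_1\|_Q\|\mathbf w_2\|_Q.$$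
   Context: For a subset $Q$ of a normed space, $\|\mathbf v\|_Q=\inf\{\sum_j|\lambda_j|:\sum_j\lambda_j\mathbf v_j=\mathbf v,\ \mathbf v_j\in Q\}$ (infimum over finite linear combinations of elements of $Q$), defined on $\mathrm{span}\{Q\}$. $\mathbb I_V$ is the identity of $V$. *)

(* Defs.v *)
From HB Require Import structures.
From mathcomp Require Import all_boot all_order all_algebra.
From mathcomp Require Import all_classical all_reals.
Set Implicit Arguments. Unset Strict Implicit. Unset Printing Implicit Defensive.
Import Order.TTheory GRing.Theory Num.Theory.
Local Open Scope classical_set_scope.
Local Open Scope ring_scope.

Record is_inner_product (R : realType) (V : lmodType R) (ip : V -> V -> R) : Prop := {
  ip_sym : forall u v, ip u v = ip v u;
  ip_linear : forall (a : R) u v w, ip (a *: u + v) w = a * ip u w + ip v w;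
  ip_pos : forall v, 0 <= ip v v;
  ip_def : forall v, ip v v = 0 -> v = 0
}.

Definition ipnorm (R : realType) (V : lmodType R) (ip : V -> V -> R) (v : V) : R :=
  Num.sqrt (ip v v).

Record is_hilbert (R : realType) (V : lmodType R) (ip : V -> V -> R) : Prop := {
  hilbert_ip : is_inner_product ip;
  hilbert_complete : forall u : nat -> V,
    (forall e : R, 0 < e -> exists N : nat, forall m n : nat,
        (N <= m)%N -> (N <= n)%N -> ipnorm ip (u m - u n) < e) ->
    exists l : V, forall e : R, 0 < e -> exists N : nat, forall n : nat,
        (N <= n)%N -> ipnorm ip (u n - l) < e
}.

Definition Qcoefs (R : realType) (V : lmodType R) (Q : set V) (v : V) : set R :=
  [set r | exists (n : nat) (lam : 'I_n -> R) (vs : 'I_n -> V),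
      (forall i, Q (vs i)) /\ \sum_(i < n) lam i *: vs i = v /\
      r = \sum_(i < n) `|lam i|].

Definition in_span (R : realType) (V : lmodType R) (Q : set V) (v : V) : Prop :=
  Qcoefs Q v !=set0.

Definition Qnorm (R : realType) (V : lmodType R) (Q : set V) (v : V) : R :=
  inf (Qcoefs Q v).

(* Main.v *)
Require Import Defs.
From HB Require Import structures.
From mathcomp Require Import all_boot all_order all_algebra.
From mathcomp Require Import all_classical all_reals.
From mathcomp Require Import ring lra.
Import Order.TTheory GRing.Theory Num.Theory.
Local Open Scope classical_set_scope.
Local Open Scope ring_scope.

Lemma lin_sum (R : realType) (V : lmodType R) (h : V -> R)
  (hl : forall (a : R) u v, h (a *: u + v) = a * h u + h v) n
  (a : 'I_n -> R) (x : 'I_n -> V) :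
  h (\sum_(i < n) a i *: x i) = \sum_(i < n) a i * h (x i).
Proof.
have h0 : h 0 = 0.
  have := hl 1 0 0; rewrite scale1r addr0 mul1r => H; lra.
elim: n a x => [|n IH] a x; first by rewrite !big_ord0.
rewrite !big_ord_recr /=.
have := hl 1 (\sum_(i < n) a (widen_ord (leqnSn n) i) *: x (widen_ord (leqnSn n) i))
  (a ord_max *: x ord_max).
rewrite scale1r mul1r => ->.
rewrite (IH (fun i => a (widen_ord (leqnSn n) i)) (fun i => x (widen_ord (leqnSn n) i))).
by have := hl (a ord_max) (x ord_max) 0; rewrite addr0 h0 addr0 => ->.
Qed.

Lemma inf_step (R : realType) (A : set R) (X c : R) :
  A !=set0 -> 0 <= c -> (forall a, A a -> X <= c * a) -> X <= c * inf A.
Proof.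
move=> [a0 Aa0] c0 H.
have [ce|cn0] := eqVneq c 0.
  by have := H a0 Aa0; rewrite ce !mul0r.
have cp : 0 < c by rewrite lt0r cn0.
rewrite -ler_pdivrMl //.
apply: lb_le_inf; first by exists a0.
by move=> a Aa; rewrite ler_pdivrMl //; exact: H.
Qed.

Lemma Qcoefs_ge0 (R : realType) (V : lmodType R) (Q : set V) v r :
  Qcoefs Q v r -> 0 <= r.
Proof.
by move=> [n [lam [vs [_ [_ ->]]]]]; apply: sumr_ge0 => i _.
Qed.

Theorem mainTheorem6 (R : realType) (V : lmodType R) (ip : V -> V -> R)
  (k : nat) (ipk : 'rV[R]_k -> 'rV[R]_k -> R)
  (Q : set V) (eps : R)
  (f : {linear V -> 'rV[R]_k}) (fstar : 'rV[R]_k -> V) :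
  is_hilbert ip ->
  is_inner_product ipk ->
  has_ubound [set ipnorm ip v | v in Q] ->
  [set - v | v in Q] = Q ->
  0 < eps ->
  (forall v1 v2, Q v1 -> Q v2 ->
     (1 - eps) * ipnorm ip (v1 - v2) ^+ 2 <= ipnorm ipk (f v1 - f v2) ^+ 2 /\
     ipnorm ipk (f v1 - f v2) ^+ 2 <= (1 + eps) * ipnorm ip (v1 - v2) ^+ 2) ->
  (forall (v : V) (y : 'rV[R]_k), ipk (f v) y = ip v (fstar y)) ->
  forall w1 w2 : V, in_span Q w1 -> in_span Q w2 ->
    `| ip w1 (w2 - fstar (f w2)) | <=
      eps * (sup [set ipnorm ip v | v in Q]) ^+ 2 * Qnorm Q w1 * Qnorm Q w2.
Proof.
move=> [Hi _] Hk Hub HQ He Hf Hadj w1 w2 S1 S2.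
set M := sup _.
have ipl := ip_linear Hi; have ips := ip_sym Hi; have ipp := ip_pos Hi.
have kl := ip_linear Hk; have ks := ip_sym Hk.
set g := fun u v => ip u v - ipk (f u) (f v).
have gl1 : forall v (a : R) x y, g (a *: x + y) v = a * g x v + g y v.
  by move=> v a x y; rewrite /g linearD linearZ /= ipl kl; ring.
have gs : forall u v, g u v = g v u by move=> u v; rewrite /g ips ks.
have nsq : forall v, ipnorm ip v ^+ 2 = ip v v by move=> v; rewrite /ipnorm sqr_sqrtr.
have nsqk : forall v, ipnorm ipk v ^+ 2 = ipk v v
  by move=> v; rewrite /ipnorm sqr_sqrtr // (ip_pos Hk).
have QM : forall v, Q v -> ip v v <= M ^+ 2.
  move=> v Qv; rewrite -nsq !expr2.
  have h1 : ipnorm ip v <= M by apply: ub_le_sup => //; exists v.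
  by apply: ler_pM => //; rewrite /ipnorm sqrtr_ge0.
have ipN : forall x y, ip (- x) y = - ip x y.
  by move=> x y; have := ipl (-1) x 0 y; rewrite addr0 scaleN1r => ->;
    have := ipl 1 0 0 y; rewrite scale1r addr0 mul1r => H; lra.
have kN : forall x y, ipk (- x) y = - ipk x y.
  by move=> x y; have := kl (-1) x 0 y; rewrite addr0 scaleN1r => ->;
    have := kl 1 0 0 y; rewrite scale1r addr0 mul1r => H; lra.
have ipD : forall x y z, ip (x + y) z = ip x z + ip y z.
  by move=> x y z; have := ipl 1 x y z; rewrite scale1r mul1r.
have kD : forall x y z, ipk (x + y) z = ipk x z + ipk y z.
  by move=> x y z; have := kl 1 x y z; rewrite scale1r mul1r.
have ipD2 : forall x y z, ip z (x + y) = ip z x + ip z y.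
  by move=> x y z; rewrite ips ipD ![ip _ z]ips.
have ipN2 : forall x y, ip y (- x) = - ip y x.
  by move=> x y; rewrite ips ipN ips.
have kD2 : forall x y z, ipk z (x + y) = ipk z x + ipk z y.
  by move=> x y z; rewrite ks kD ![ipk _ z]ks.
have kN2 : forall x y, ipk y (- x) = - ipk y x.
  by move=> x y; rewrite ks kN ks.
have key : forall v u, Q v -> Q u -> `|g v u| <= eps * M ^+ 2.
  move=> v u Qv Qu.
  have Qnu : Q (- u) by rewrite -HQ; exists u.
  have [A1 A2] := Hf v u Qv Qu.
  have [B1 B2] := Hf v (- u) Qv Qnu.
  move: A1 A2 B1 B2; rewrite !nsq !nsqk !linearN /= !opprK.
  rewrite !ipD !ipD2 !kD !kD2 !ipN !ipN2 !kN !kN2 !opprK ![ip u v]ips ![ipk (f u) (f v)]ks.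
  have := QM v Qv; have := QM u Qu.
  rewrite /g; set a := ip v v; set b := ip u u; set c := ip v u.
  set d := ipk (f v) (f v); set e := ipk (f u) (f u); set p := ipk (f v) (f u).
  move=> Hb Ha A1 A2 B1 B2.
  have ha : eps * a <= eps * M ^+ 2 by rewrite ler_pM2l.
  have hb : eps * b <= eps * M ^+ 2 by rewrite ler_pM2l.
  rewrite ler_norml; apply/andP; split; lra.
have claim : forall r1 r2, Qcoefs Q w1 r1 -> Qcoefs Q w2 r2 ->
    `| ip w1 (w2 - fstar (f w2)) | <= eps * M ^+ 2 * r1 * r2.
  move=> r1 r2 [n [lam [vs [Qv [Ew1 ->]]]]] [m [mu [us [Qu [Ew2 ->]]]]].
  have -> : ip w1 (w2 - fstar (f w2)) = g w1 w2.
    by rewrite /g Hadj ipD2 ipN2.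
  rewrite -Ew1 (@lin_sum _ _ _ (gl1 w2)).
  rewrite (eq_bigr (fun i => lam i * \sum_(j < m) mu j * g (us j) (vs i))); last first.
    by move=> i _; rewrite gs -Ew2 (@lin_sum _ _ _ (gl1 (vs i))).
  apply: le_trans (ler_norm_sum _ _ _) _.
  rewrite mulrAC mulrC mulr_suml; apply: ler_sum => i _.
  rewrite normrM; apply: ler_pM => //.
  rewrite mulr_sumr; apply: le_trans (ler_norm_sum _ _ _) _.
  apply: ler_sum => j _; rewrite normrM [_ * `|mu j|]mulrC; apply: ler_pM => //.
  by rewrite gs; apply: key.
have c0 : 0 <= eps * M ^+ 2 by apply: mulr_ge0; [exact: ltW | exact: sqr_ge0].
have inf1 : 0 <= Qnorm Q w1.
  by apply: lb_le_inf => // r /Qcoefs_ge0.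
rewrite /Qnorm; apply: inf_step => //; first exact: mulr_ge0.
move=> r2 H2; rewrite mulrAC; apply: inf_step => //.
  by apply: mulr_ge0 => //; exact: Qcoefs_ge0 H2.
by move=> r1 H1; rewrite mulrAC; apply: claim.
Qed.
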